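(* Let $A:[1,\infty)\to\mathbb R^{d\times d}$ be continuous with evolution family $T(t,s)$ for $x'=A(t)x$, and let $\|\cdot\|$ be a norm on $\mathbb R^d$. The following are equivalent: (1) $x'=A(t)x$ admits a nonuniform strong polynomial dichotomy; (2) there is a family of norms $\mathcal S=\{\|\cdot\|_t;\ t\ge1\}$ on $\mathbb R^d$ such that $x'=A(t)x$ admits a strong polynomial dichotomy with respect to $\mathcal S$ and there exist $C>0$, $\delta\ge0$ with $\|x\|\le\|x\|_t\le Ct^\delta\|x\|$ for all $x\in\mathbb R^d$, $t\ge1$.
   Context: Nonuniform strong polynomial dichotomy: there exist $K>0$, $a\ge\lambda>0$, $\varepsilon\ge0$ and projections $P(t)$, $t\ge1$, with $P(t)T(t,s)=T(t,s)P(s)$ for $t\ge s\ge1$ and, for $t\ge s\ge1$, $Q(t)=\mathrm{Id}-P(t)$: $\|T(t,s)P(s)\|\le K(t/s)^{-\lambda}s^\varepsilon$, $\|T(s,t)Q(t)\|\le K(t/s)^{-\lambda}t^\varepsilon$, $\|T(t,s)\|\le K(t/s)^as^\varepsilon$, $\|T(s,t)\|\le K(t/s)^at^\varepsilon$. Strong polynomial dichotomy w.r.t. $\{\|\cdot\|_t\}$: there exist $K>0$, $a\ge\lambda>0$ and projections $P(t)$ with $P(t)T(t,s)=T(t,s)P(s)$ and, for $t\ge s\ge1$, $x\in\mathbb R^d$: $\|T(t,s)P(s)x\|_t\le K(t/s)^{-\lambda}\|x\|_s$, $\|T(s,t)Q(t)x\|_s\le K(t/s)^{-\lambda}\|x\|_t$,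 $\|T(t,s)x\|_t\le K(t/s)^a\|x\|_s$, $\|T(s,t)x\|_s\le K(t/s)^a\|x\|_t$. *)

(* Defs.v *)
From HB Require Import structures.
From mathcomp Require Import all_boot all_order all_algebra.
From mathcomp Require Import all_classical all_reals all_analysis.
Set Implicit Arguments. Unset Strict Implicit. Unset Printing Implicit Defensive.
Import Order.TTheory GRing.Theory Num.Theory.
Import numFieldNormedType.Exports.
Local Open Scope classical_set_scope.
Local Open Scope ring_scope.

Definition is_norm (R : realType) (d : nat) (N : 'cV[R]_d -> R) : Prop :=
  [/\ forall x, 0 <= N x,
      forall x, N x = 0 -> x = 0,
      forall (a : R) x, N (a *: x) = `|a| * N x
    & forall x y, N (x + y) <= N x + N y].

Definition opnorm (R : realType) (d : nat) (N : 'cV[R]_d -> R) (M : 'M[R]_d) : R :=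
  sup [set N (M *m x) | x in [set x : 'cV[R]_d | N x <= 1]].

Definition evolution_family (R : realType) (d : nat)
    (A : R -> 'M[R]_d) (T : R -> R -> 'M[R]_d) : Prop :=
  [/\ forall s, 1 <= s -> T s s = 1%:M,
      forall s, 1 <= s -> {within `[1, +oo[, continuous (fun t => T t s)}
    & forall s t : R, 1 <= s -> 1 < t ->
        @is_derive R R _ t (1 : R) (fun u => T u s) (A t *m T t s)].

Definition invariant_projections (R : realType) (d : nat)
    (T : R -> R -> 'M[R]_d) (P : R -> 'M[R]_d) : Prop :=
  (forall t, 1 <= t -> P t *m P t = P t) /\
  (forall t s, 1 <= s -> s <= t -> P t *m T t s = T t s *m P s).

Definition nonuniform_strong_poly_dichotomy (R : realType) (d : nat)
    (N : 'cV[R]_d -> R) (T : R -> R -> 'M[R]_d) : Prop :=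
  exists (K a lam eps : R) (P : R -> 'M[R]_d),
    [/\ 0 < K, 0 < lam, lam <= a, 0 <= eps /\
        invariant_projections T P &
        forall t s, 1 <= s -> s <= t ->
        [/\ opnorm N (T t s *m P s) <= K * (t / s) `^ (- lam) * s `^ eps,
            opnorm N (T s t *m (1%:M - P t)) <= K * (t / s) `^ (- lam) * t `^ eps,
            opnorm N (T t s) <= K * (t / s) `^ a * s `^ eps &
            opnorm N (T s t) <= K * (t / s) `^ a * t `^ eps]].

Definition strong_poly_dichotomy_wrt (R : realType) (d : nat)
    (Nt : R -> 'cV[R]_d -> R) (T : R -> R -> 'M[R]_d) : Prop :=
  exists (K a lam : R) (P : R -> 'M[R]_d),
    [/\ 0 < K, 0 < lam, lam <= a /\
        invariant_projections T P &
        forall t s (x : 'cV[R]_d), 1 <= s -> s <= t ->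
        [/\ Nt t (T t s *m P s *m x) <= K * (t / s) `^ (- lam) * Nt s x,
            Nt s (T s t *m (1%:M - P t) *m x) <= K * (t / s) `^ (- lam) * Nt t x,
            Nt t (T t s *m x) <= K * (t / s) `^ a * Nt s x &
            Nt s (T s t *m x) <= K * (t / s) `^ a * Nt t x]].

(* Main.v *)
Require Import Defs.
From HB Require Import structures.
From mathcomp Require Import all_boot all_order all_algebra.
From mathcomp Require Import all_classical all_reals all_analysis.
From mathcomp Require Import ring lra.
Import Order.TTheory GRing.Theory Num.Theory.
Import numFieldNormedType.Exports.
Local Open Scope classical_set_scope.
Local Open Scope ring_scope.
Require Import Defs.
From HB Require Import structures.
From mathcomp Require Import all_boot all_order all_algebra.
From mathcomp Require Import all_classical all_reals all_analysis.
Import Order.TTheory GRing.Theory Num.Theory.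
Import numFieldNormedType.Exports.
Local Open Scope classical_set_scope.
Local Open Scope ring_scope.

Definition rho {R : realType} (lam a u : R) : R := Num.min (u `^ lam) (u `^ a).

Lemma rho_ge0 {R : realType} (lam a u : R) : 0 <= rho lam a u.
Proof. by rewrite /rho le_min !powR_ge0. Qed.

Lemma rho_mul {R : realType} (lam a u v : R) : 0 <= u -> 0 <= v ->
  rho lam a u * rho lam a v <= rho lam a (u * v).
Proof.
move=> u0 v0; rewrite /rho le_min !powRM //; apply/andP; split.
  by apply: ler_pM; rewrite ?le_min ?powR_ge0 ?ge_min ?lexx.
by apply: ler_pM; rewrite ?le_min ?powR_ge0 ?ge_min ?lexx ?orbT.
Qed.

Lemma rho_ge1 {R : realType} (lam a u : R) : lam <= a -> 1 <= u ->
  rho lam a u = u `^ lam.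
Proof. by move=> la u1; rewrite /rho; apply/min_idPl; apply: ler_powR. Qed.

Lemma rho_le1 {R : realType} (lam a u : R) : lam <= a -> 0 < u -> u <= 1 ->
  rho lam a u = u `^ a.
Proof. by move=> la u0 u1; rewrite /rho; apply/min_idPr; apply: ger_powR; rewrite ?u0. Qed.

Lemma powR_ge1 {R : realType} (u r : R) : 1 <= u -> 0 <= r -> 1 <= u `^ r.
Proof. by move=> u1 r0; rewrite -(powRr0 u); apply: ler_powR. Qed.

Lemma powR_inv_mul {R : realType} (u r : R) : 0 < u -> u `^ r * (u^-1) `^ r = 1.
Proof. by move=> u0; rewrite -powRM ?invr_ge0 ?ltW // mulfV ?gt_eqF // powR1. Qed.

Lemma powR_N_mul {R : realType} (u r : R) : 0 < u -> u `^ (- r) * u `^ r = 1.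
Proof. by move=> u0; rewrite powRN mulVf // powR_eq0 negb_and gt_eqF. Qed.

Lemma rhoA {R : realType} (lam a x y : R) : 0 < lam -> lam <= a -> 0 <= x -> 1 <= y ->
  rho lam a x <= y `^ (- lam) * rho lam a (x * y).
Proof.
move=> l0 la x0 y1.
have y0 : 0 < y by apply: lt_le_trans y1.
rewrite -[X in X <= _]mulr1 -(@powR_N_mul _ y lam y0) mulrCA; apply: ler_wpM2l; first exact: powR_ge0.
by rewrite -(rho_ge1 _ _ _ la y1); apply: rho_mul => //; apply: ltW.
Qed.

Lemma rhoB {R : realType} (lam a x y : R) : 0 < lam -> lam <= a -> 0 <= x -> 1 <= y ->
  rho lam a (x * y) <= y `^ a * rho lam a x.
Proof.
move=> l0 la x0 y1.
have y0 : 0 < y by apply: lt_le_trans y1.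
have yi0 : 0 < y^-1 by rewrite invr_gt0.
have yi1 : y^-1 <= 1 by rewrite invf_le1.
rewrite -[X in X <= _]mul1r -(@powR_inv_mul _ y a y0) -mulrA; apply: ler_wpM2l; first exact: powR_ge0.
rewrite -(rho_le1 _ _ _ la yi0 yi1) mulrC.
apply: le_trans (rho_mul _ _ _ _ _ _) _.
- by rewrite mulr_ge0 // ltW.
- by rewrite invr_ge0 ltW.
- by rewrite mulfK ?gt_eqF.
Qed.

Lemma powRN_le1 {R : realType} (y r : R) : 1 <= y -> 0 <= r -> y `^ (- r) <= 1.
Proof. by move=> y1 r0; rewrite -(powRr0 y); apply: ler_powR; rewrite // oppr_le0. Qed.

Lemma powRN_le_powR {R : realType} (y r a : R) : 1 <= y -> 0 <= r -> 0 <= a ->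
  y `^ (- r) <= y `^ a.
Proof. by move=> y1 r0 a0; apply: ler_powR => //; apply: le_trans a0; rewrite oppr_le0. Qed.


Lemma normN0 {R : realType} {d : nat} (N : 'cV[R]_d -> R) : is_norm N -> N 0 = 0.
Proof. by case=> _ _ hZ _; rewrite -(scale0r (0 : 'cV[R]_d)) hZ normr0 mul0r. Qed.

Lemma normNN {R : realType} {d : nat} (N : 'cV[R]_d -> R) x : is_norm N -> N (- x) = N x.
Proof. by case=> _ _ hZ _; rewrite -scaleN1r hZ normrN normr1 mul1r. Qed.

Lemma normN_sum {R : realType} {d n : nat} (N : 'cV[R]_d -> R) (f : 'I_n -> 'cV[R]_d) :
  is_norm N -> N (\sum_(i < n) f i) <= \sum_(i < n) N (f i).
Proof.
move=> hN; have [_ _ _ hT] := hN.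
elim/big_rec2: _ => [|i y1 y2 _ IH]; first by rewrite normN0.
by apply: le_trans (hT _ _) _; rewrite lerD2l.
Qed.

Lemma cV_decomp {R : realType} {d : nat} (x : 'cV[R]_d) :
  x = \sum_(i < d) x i 0 *: delta_mx i 0.
Proof.
rewrite {1}(matrix_sum_delta x); apply: eq_bigr => i _.
by rewrite big_ord1.
Qed.

Lemma normN_le_sum {R : realType} {d : nat} (N : 'cV[R]_d -> R) (x : 'cV[R]_d) :
  is_norm N -> N x <= \sum_(i < d) `|x i 0| * N (delta_mx i 0).
Proof.
move=> hN; have [_ _ hZ _] := hN.
rewrite {1}(cV_decomp x); apply: le_trans (normN_sum _ _ hN) _.
by apply: ler_sum => i _; rewrite hZ.
Qed.

Lemma mx_entry_le {R : realType} {m n : nat} (w : 'M[R]_(m, n)) i j : `|w i j| <= `|w|.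
Proof.
rewrite [leRHS]/Num.Def.normr/= mx_normrE.
by apply: le_trans (le_bigmax _ _ (i, j)).
Qed.


Lemma normN_dist {R : realType} {d : nat} (N : 'cV[R]_d -> R) u v :
  is_norm N -> `|N u - N v| <= N (u - v).
Proof.
move=> hN; have [_ _ _ hT] := hN.
have h1 := hT (v - u) u; have h2 := hT (u - v) v.
rewrite subrK -opprB normNN // in h1; rewrite subrK in h2.
rewrite ler_norml; apply/andP; split; lra.
Qed.

Lemma norm_entry_bound {R : realType} {d : nat} (N : 'cV[R]_d -> R) :
  is_norm N -> exists c, 0 < c /\ forall (x : 'cV[R]_d) i, `|x i 0| <= c * N x.
Proof.
move=> hN; have [hP hD hZ hT] := hN.
case: d N hN hP hD hZ hT => [|d] N hN hP hD hZ hT.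
  by exists 1; split => // x [].
pose Nr (v : 'rV[R]_d.+1) := N v^T.
pose L := \sum_(i < d.+1) N (delta_mx i 0).
have L0 : 0 <= L by apply: sumr_ge0 => i _; exact: hP.
have NrL w : Nr w <= `|w| * L.
  rewrite /Nr /L mulr_sumr; apply: le_trans (normN_le_sum _ _ hN) _.
  apply: ler_sum => i _; apply: ler_wpM2r; first exact: hP.
  by rewrite mxE; apply: mx_entry_le.
have Nrc : continuous Nr.
  move=> x; apply/(@cvgrPdist_le _ _ _ _ (nbhs_filter x)) => e e0.
  have L1 : 0 < L + 1 by rewrite ltr_wpDl.
  have dpos : 0 < e / (L + 1) by rewrite divr_gt0.
  apply: (filterS _ (nbhsx_ballx x _ dpos)) => y.
  rewrite mx_norm_ball /ball_ /= => hy.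
  apply: le_trans (normN_dist _ _ _ hN) _.
  rewrite -linearB /=; apply: le_trans (NrL _) _.
  apply: le_trans (_ : e / (L + 1) * L <= e).
    by apply: ler_wpM2r => //; apply: ltW.
  by rewrite mulrAC ler_pdivrMr // ler_pM2l // lerDl.
pose S := [set v : 'rV[R]_d.+1 | `|v| = 1].
have S0 : S !=set0.
  exists (const_mx 1); rewrite /S /=.
  apply/le_anti/andP; split.
  - rewrite [leLHS]/Num.Def.normr/= mx_normrE; apply: bigmax_le => // -[i j] _.
    by rewrite mxE normr1.
  - by apply: le_trans (mx_entry_le _ 0 0); rewrite mxE normr1.
have Sc : compact S.
  apply: bounded_closed_compact.
    by exists 1; split => // z z1 v /= ->; exact: ltW.
  apply: (@preimage_closed _ _ (fun v : 'rV[R]_d.+1 => `|v|) [set r | r = 1]).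
    by move=> z _; apply: norm_continuous.
  exact: closed_eq.
have [c0 c0S c0min] := compact_EVT_min S0 Sc (continuous_subspaceT Nrc).
have m0 : 0 < Nr c0.
  rewrite lt_neqAle hP andbT; apply/eqP => /esym /hD.
  move: c0S; rewrite inE /S /= => c01 /(congr1 trmx); rewrite trmxK trmx0 => c00.
  by move: c01; rewrite c00 normr0 => /esym/eqP; rewrite oner_eq0.
exists (Nr c0)^-1; split; first by rewrite invr_gt0.
move=> x i.
have [->|x0] := eqVneq x 0.
  by rewrite mxE normr0 normN0 // mulr0.
pose w := x^T; pose n := `|w|.
have n0 : 0 < n.
  rewrite normr_gt0; apply/eqP => /(congr1 trmx); rewrite trmxK trmx0.
  by apply/eqP.
have ni0 : 0 <= n^-1 by rewrite invr_ge0 ltW.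
have vS : (n^-1 *: w) \in S.
  by rewrite inE /S /= normrZ (ger0_norm ni0) mulVf ?gt_eqF.
have := c0min _ vS; rewrite /Nr linearZ /= trmxK hZ (ger0_norm ni0).
move=> hm.
have : n <= (Nr c0)^-1 * N x.
  by rewrite mulrC ler_pdivlMr // mulrC -ler_pdivlMr // mulrC.
move=> hn; apply: le_trans hn.
by have := mx_entry_le w 0 i; rewrite mxE.
Qed.


Lemma opnorm_bound {R : realType} {d : nat} (N : 'cV[R]_d -> R) (M : 'M[R]_d) :
  is_norm N -> forall x, N (M *m x) <= opnorm N M * N x.
Proof.
move=> hN; have [hP hD hZ hT] := hN.
have [c [c0 hc]] := norm_entry_bound _ hN.
pose LM := \sum_(i < d) N (M *m delta_mx i 0).
have LM0 : 0 <= LM by apply: sumr_ge0 => i _; exact: hP.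
have bnd x : N (M *m x) <= c * N x * LM.
  rewrite {1}(cV_decomp x) mulmx_sumr; apply: le_trans (normN_sum _ _ hN) _.
  rewrite mulr_sumr; apply: ler_sum => i _; rewrite -scalemxAr hZ.
  by apply: ler_wpM2r; [exact: hP| exact: hc].
rewrite /opnorm.
set E := [set N (M *m x) | x in [set x | N x <= 1]].
have hs : has_sup E.
  split; first by exists (N (M *m 0)), 0 => //=; rewrite normN0 // ler01.
  exists (c * LM) => _ [x /= x1 <-]; apply: le_trans (bnd x) _.
  rewrite mulrAC -[leRHS]mulr1; apply: ler_wpM2l => //.
  by rewrite mulr_ge0 // ltW.
move=> x.
have [->|x0] := eqVneq x 0.
  by rewrite mulmx0 normN0 // mulr0.
have nx0 : 0 < N x.
  by rewrite lt_neqAle hP andbT; apply/eqP => /esym /hD; apply/eqP.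
have nxi : 0 <= (N x)^-1 by rewrite invr_ge0 ltW.
have hub : forall y, E y -> y <= sup E by move=> y Ey; apply: sup_upper_bound.
have := hub (N (M *m ((N x)^-1 *: x))).
rewrite -scalemxAr hZ (ger0_norm nxi) => h.
rewrite -ler_pdivrMr // mulrC; apply: h.
exists ((N x)^-1 *: x) => //=.
rewrite hZ (ger0_norm nxi) mulVf ?gt_eqF //.
by rewrite -scalemxAr hZ (ger0_norm nxi).
Qed.


Lemma le_sum_term {R : realType} {n : nat} (f : 'I_n -> R) i :
  (forall k, 0 <= f k) -> f i <= \sum_(k < n) f k.
Proof. by move=> f0; rewrite (bigD1 i) //= lerDl sumr_ge0. Qed.

Lemma cvg_sumI {R : realType} {T : Type} (F : set_system T) {FF : Filter F} {n : nat}
  (f : 'I_n -> T -> R) (l : 'I_n -> R) :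
  (forall i, f i x @[x --> F] --> l i) ->
  (\sum_(i < n) f i x) @[x --> F] --> \sum_(i < n) l i.
Proof.
move=> h; apply: cvg_big.
  exact: add_continuous.
move=> i _; exact: h.
Qed.

Lemma within_entry {R : realType} {m n : nat} (D : set R) (M : R -> 'M[R]_(m, n)) :
  {within D, continuous M} -> forall i j, {within D, continuous (fun u => M u i j)}.
Proof.
move=> hM i j; apply/subspace_continuousP => x Dx.
have := (subspace_continuousP _ _).1 hM x Dx.
by apply: (continuous_cvg _ (@coord_continuous _ _ _ i j (M x))).
Qed.

Lemma is_derive_entry {R : realType} {m n : nat} (M : R -> 'M[R]_(m, n)) (t : R) (D : 'M[R]_(m, n)) :
  is_derive t 1 M D -> forall i j, is_derive t 1 (fun u => M u i j) (D i j).
Proof.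
case=> hd hv i j; apply: DeriveDef.
  exact: ((derivable_mxP M t 1).1 hd i j).
by rewrite -hv (derive_mx hd) mxE.
Qed.

Lemma ode_step {R : realType} {d : nat} (A X : R -> 'M[R]_d) (L a b p : R) :
  1 <= a -> a <= b -> a <= p -> p <= b -> 0 <= L ->
  (forall u : R, a <= u -> u <= b -> forall i k : 'I_d, `|A u i k| <= L) ->
  (b - a) * ((d * d)%:R * L) <= 2^-1 ->
  (forall i j : 'I_d, {within `[1, +oo[, continuous (fun u => X u i j)}) ->
  (forall u : R, 1 < u -> forall i j : 'I_d,
      is_derive u 1 (fun v => X v i j) (\sum_(k < d) A u i k * X u k j)) ->
  X p = 0 -> forall u : R, a <= u -> u <= b -> X u = 0.
Proof.
move=> a1 ab ap pb L0 hA hh hX hD Xp.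
pose F u := \sum_(i < d) \sum_(j < d) `|X u i j|.
have sub1 : forall x y : R, 1 <= x -> `[x, y] `<=` `[1, +oo[.
  move=> x y x1 z; rewrite /= !in_itv /= andbT => /andP[xz _].
  exact: le_trans xz.
have hXab : forall x y : R, 1 <= x -> forall i j, {within `[x, y], continuous (fun u => X u i j)}.
  by move=> x y x1 i j; apply: continuous_subspaceW (hX i j); exact: sub1.
have Fc : {within `[a, b], continuous F}.
  apply/subspace_continuousP => x xab.
  apply: cvg_sumI => i; apply: cvg_sumI => j; apply: cvg_norm.
  exact: (subspace_continuousP _ _).1 (hXab a b a1 i j) x xab.
have F0 u : 0 <= F u by apply: sumr_ge0 => i _; apply: sumr_ge0 => j _.
have Fterm u i j : `|X u i j| <= F u.
  apply: le_trans (le_sum_term (fun i => \sum_(j < d) `|X u i j|) i _); last first.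
    by move=> k; apply: sumr_ge0.
  exact: (le_sum_term (fun j => `|X u i j|) j).
have Fcol u j : \sum_(k < d) `|X u k j| <= F u.
  apply: ler_sum => k _; exact: (le_sum_term (fun j => `|X u k j|) j).
have gt1 : forall x y z : R, 1 <= y -> x \in `]y, z[ -> 1 < x.
  by move=> x y z y1; rewrite in_itv /= => /andP[yx _]; exact: le_lt_trans yx.
have [c cab cmax] := EVT_max ab Fc.
have cab' := cab; rewrite in_itv /= in cab'; case/andP: cab' => ac cb.
have dfb u i j : a <= u -> u <= b -> `|\sum_(k < d) A u i k * X u k j| <= L * F c.
  move=> au ub; apply: le_trans (ler_norm_sum _ _ _) _.
  apply: le_trans (_ : \sum_(k < d) L * `|X u k j| <= _).
    apply: ler_sum => k _; rewrite normrM; apply: ler_wpM2r => //; exact: hA.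
  rewrite -mulr_sumr; apply: ler_wpM2l => //; apply: le_trans (Fcol u j) _.
  by apply: cmax; rewrite in_itv /= au ub.
have hij i j : `|X c i j| <= (b - a) * (L * F c).
  have Xp0 : X p i j = 0 by rewrite Xp mxE.
  case: (leP p c) => pc.
  - have [xi xipc hxi] := MVT_segment pc
      (fun x hx => hD x (gt1 _ _ _ (le_trans a1 ap) hx) i j)
      (hXab p c (le_trans a1 ap) i j).
    move: hxi; rewrite Xp0 subr0 => ->; have cp0 : 0 <= c - p by rewrite subr_ge0.
    rewrite normrM mulrC (ger0_norm cp0).
    move: xipc; rewrite in_itv /= => /andP[pxi xic].
    apply: ler_pM => //; first lra.
    by apply: dfb; [exact: le_trans ap pxi | exact: le_trans xic cb].
  - have cp := ltW pc.
    have [xi xipc hxi] := MVT_segment cp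
      (fun x hx => hD x (gt1 _ _ _ (le_trans a1 ac) hx) i j)
      (hXab c p (le_trans a1 ac) i j).
    move: hxi; rewrite Xp0 sub0r => /(congr1 -%R); rewrite opprK => ->.
    have cp0 : 0 <= p - c by rewrite subr_ge0.
    rewrite normrN normrM mulrC (ger0_norm cp0).
    move: xipc; rewrite in_itv /= => /andP[cxi xip].
    apply: ler_pM => //; first lra.
    by apply: dfb; [exact: le_trans ac cxi | exact: le_trans xip pb].
have Fcle : F c <= (b - a) * ((d * d)%:R * L) * F c.
  apply: le_trans (_ : \sum_(i < d) \sum_(j < d) ((b - a) * (L * F c)) <= _).
    by apply: ler_sum => i _; apply: ler_sum => j _; exact: hij.
  rewrite !sumr_const !card_ord -mulrnA.
  rewrite (_ : (b - a) * (L * F c) *+ (d * d) = (b - a) * ((d * d)%:R * L) * F c) //.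
  by rewrite -mulr_natl; ring.
have Fc0 : F c <= 0.
  have ba0 : 0 <= b - a by rewrite subr_ge0.
  have := F0 c; have := mulr_ge0 ba0 (mulr_ge0 (ler0n _ (d * d)) L0).
  move: hh Fcle; set k := (b - a) * _; move=> hh Fcle h1 h2; nra.
move=> u au ub; apply/matrixP => i j; rewrite mxE.
apply/normr0_eq0/le_anti; rewrite normr_ge0 andbT.
apply: le_trans (Fterm u i j) _; apply: le_trans Fc0.
by apply: cmax; rewrite in_itv /= au ub.
Qed.


Lemma is_derive_mulc {R : realType} (f : R -> R) (c x df : R) :
  is_derive x 1 f df -> is_derive x 1 (fun w => f w * c) (df * c).
Proof.
move=> H; have H' := @is_deriveZ _ _ _ f c x 1 df H.
have -> : (fun w => f w * c) = c \*: f by apply/funext => w /=; rewrite mulrC.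
by apply: is_derive_eq H' _; rewrite mulrC.
Qed.

Lemma is_derive_sumf {R : realType} {n : nat} (h : 'I_n -> R -> R) (x : R) (dh : 'I_n -> R) :
  (forall i, is_derive x 1 (h i) (dh i)) ->
  is_derive x 1 (fun w => \sum_(i < n) h i w) (\sum_(i < n) dh i).
Proof.
move=> H; have := @is_derive_sum _ _ _ n h x 1 dh H.
by rewrite fct_sumE.
Qed.

Lemma is_derive_subf {R : realType} (f g : R -> R) (x df dg : R) :
  is_derive x 1 f df -> is_derive x 1 g dg ->
  is_derive x 1 (fun w => f w - g w) (df - dg).
Proof. by move=> H1 H2; have := @is_deriveB _ _ _ f g x 1 df dg H1 H2. Qed.

Lemma A_bound {R : realType} {d : nat} (A : R -> 'M[R]_d) (M : R) :
  {within `[1, +oo[, continuous A} -> 1 <= M ->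
  exists L, 0 <= L /\ forall u, 1 <= u -> u <= M -> forall i k, `|A u i k| <= L.
Proof.
move=> hA M1.
have sub : `[1, M] `<=` `[1, +oo[.
  by move=> z; rewrite /= !in_itv /= andbT => /andP[].
have hAM := continuous_subspaceW sub hA.
have fc : {within `[1, M], continuous (fun u => `|A u|)}.
  apply/subspace_continuousP => x xI; apply: cvg_norm.
  exact: (subspace_continuousP _ _).1 hAM x xI.
have [c cI cmax] := EVT_max M1 fc.
exists `|A c|; split => // u u1 uM i k.
apply: le_trans (mx_entry_le _ i k) _; apply: cmax.
by rewrite in_itv /= u1 uM.
Qed.


Lemma ode_uniq {R : realType} {d : nat} (A X : R -> 'M[R]_d) (t0 : R) :
  {within `[1, +oo[, continuous A} ->
  (forall i j : 'I_d, {within `[1, +oo[, continuous (fun u => X u i j)}) ->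
  (forall u : R, 1 < u -> forall i j : 'I_d,
      is_derive u 1 (fun v => X v i j) (\sum_(k < d) A u i k * X u k j)) ->
  1 <= t0 -> X t0 = 0 -> forall u : R, 1 <= u -> X u = 0.
Proof.
move=> hA hX hD t01 Xt0 u u1.
have M1 : 1 <= u + t0 by lra.
have [L [L0 hL]] := A_bound _ _ hA M1.
set K := (d * d)%:R * L.
have K0 : 0 <= K by rewrite mulr_ge0.
pose N := (Num.Def.archi_bound (2 * `|u - t0| * K)).+1.
have hN : 2 * `|u - t0| * K < N%:R.
  apply: lt_le_trans (archi_boundP _) _; first by rewrite !mulr_ge0.
  by rewrite ler_nat.
have N0 : 0 < N%:R :> R by rewrite ltr0n.
pose h := (u - t0) / N%:R.
pose q (n : nat) := t0 + (minn n N)%:R * h.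
have qb n : 1 <= q n /\ q n <= u + t0.
  pose al := (minn n N)%:R / N%:R : R.
  have al0 : 0 <= al by rewrite divr_ge0 // ler0n.
  have al1 : al <= 1 by rewrite ler_pdivrMr // mul1r ler_nat geq_minr.
  have -> : q n = t0 + al * (u - t0) by rewrite /q /h /al mulrA mulrAC.
  split; nra.
have qstep n : `|q n.+1 - q n| * K <= 2^-1.
  rewrite /q; case: (ltnP n N) => nN.
    rewrite (minn_idPl nN).
    have -> : t0 + n.+1%:R * h - (t0 + n%:R * h) = h by rewrite -addn1 natrD; ring.
    rewrite /h normrM normfV (ger0_norm (ltW N0)).
    rewrite mulrAC ler_pdivrMr //; move: hN; rewrite -mulrA.
    set y := `|u - t0| * K; lra.
  rewrite (minn_idPr (leqW nN)) subrr normr0 mul0r.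
  by rewrite invr_ge0 ler0n.
have Xq n : X (q n) = 0.
  elim: n => [|n IH].
    by rewrite /q min0n mul0r addr0.
  have [qa qb'] := qb n; have [qa1 qb1] := qb n.+1.
  have hA' : forall a b, 1 <= a -> b <= u + t0 -> forall v, a <= v -> v <= b ->
      forall i k, `|A v i k| <= L.
    move=> a b a1 bM v av vb i k; apply: hL; [exact: le_trans av | exact: le_trans vb bM].
  case: (leP (q n) (q n.+1)) => hle.
  - apply: (@ode_step _ _ A X L (q n) (q n.+1) (q n)) => //.
    + exact: hA'.
    + by have := qstep n; rewrite ger0_norm // subr_ge0.
  - have hle' := ltW hle.
    apply: (@ode_step _ _ A X L (q n.+1) (q n) (q n)) => //.
    + exact: hA'.
    + have hn : q n.+1 - q n <= 0 by rewrite subr_le0.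
      by have := qstep n; rewrite (ler0_norm hn) opprB.
have -> : u = q N.
  by rewrite /q minnn /h mulrC divfK ?gt_eqF // addrC subrK.
exact: Xq.
Qed.


Lemma cocycle {R : realType} {d : nat} (A : R -> 'M[R]_d) (T : R -> R -> 'M[R]_d) :
  {within `[1, +oo[, continuous A} -> evolution_family A T ->
  forall u t s : R, 1 <= u -> 1 <= t -> 1 <= s -> T u t *m T t s = T u s.
Proof.
move=> hA [hT1 hTc hTd] u t s u1 t1 s1.
pose C := T t s.
pose X v := T v t *m C - T v s.
suff : X u = 0 by move/eqP; rewrite subr_eq0 => /eqP.
have hXe : forall i j, (fun v => X v i j) =
    (fun v => \sum_(k < d) T v t i k * C k j - T v s i j).
  by move=> i j; apply/funext => v; rewrite /X !mxE.
apply: (@ode_uniq _ _ A X t) => //.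
- move=> i j; rewrite hXe.
  apply/subspace_continuousP => x xI.
  apply: cvgB.
    apply: cvg_sumI => k.
    apply: (@cvgM _ _ _ _ (fun v => T v t i k) (fun _ => C k j)); last exact: cvg_cst.
    exact: (subspace_continuousP _ _).1 (within_entry _ _ (hTc t t1) i k) x xI.
  exact: (subspace_continuousP _ _).1 (within_entry _ _ (hTc s s1) i j) x xI.
- move=> v v1 i j; rewrite hXe.
  have H1 : forall k, is_derive v 1 (fun w => T w t i k * C k j) ((A v *m T v t) i k * C k j).
    by move=> k; apply: is_derive_mulc; exact: (is_derive_entry _ _ _ (hTd t v t1 v1)).
  have H2 := is_derive_sumf _ _ _ H1.
  have H := is_derive_subf _ _ _ _ _ H2 (is_derive_entry _ _ _ (hTd s v s1 v1) i j).
  apply: is_derive_eq H _.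
  have -> : \sum_(k < d) A v i k * X v k j = (A v *m X v) i j by rewrite mxE.
  by rewrite /X mulmxBr mulmxA !mxE.
- by rewrite /X hT1 // mul1mx subrr.
Qed.


Lemma opnorm_le {R : realType} {d : nat} (N : 'cV[R]_d -> R) (M : 'M[R]_d) (B : R) :
  is_norm N -> 0 <= B -> (forall x, N (M *m x) <= B * N x) -> opnorm N M <= B.
Proof.
move=> hN B0 hB; rewrite /opnorm; apply: ge_sup.
  by exists (N (M *m 0)), 0 => //=; rewrite normN0 // ler01.
move=> _ [x /= x1 <-]; apply: le_trans (hB x) _.
by rewrite -[leRHS]mulr1 ler_wpM2l.
Qed.

Lemma dir21 {R : realType} {d : nat} (T : R -> R -> 'M[R]_d) (N : 'cV[R]_d -> R) :
  is_norm N ->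
  (exists Nt : R -> 'cV[R]_d -> R,
     (forall t, 1 <= t -> is_norm (Nt t)) /\
     strong_poly_dichotomy_wrt Nt T /\
     exists (C delta : R), 0 < C /\ 0 <= delta /\
       forall t (x : 'cV[R]_d), 1 <= t ->
         N x <= Nt t x /\ Nt t x <= C * t `^ delta * N x) ->
  nonuniform_strong_poly_dichotomy N T.
Proof.
move=> hN [Nt [hNt [[K [a [lam [P [K0 l0 [la hP] hb]]]]] [C [de [C0 [de0 hC]]]]]]].
exists (K * C), a, lam, de, P; split => //; first by rewrite mulr_gt0.
move=> t s s1 st.
have t1 : 1 <= t := le_trans s1 st.
have hgen : forall (M : 'M[R]_d) (r w v : R), 1 <= w -> 1 <= v -> 0 <= r ->
    (forall x, Nt w (M *m x) <= K * r * Nt v x) ->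
    opnorm N M <= K * C * r * v `^ de.
  move=> M r w v w1 v1 r0 hM; apply: opnorm_le => //.
    by rewrite !mulr_ge0 ?powR_ge0 // ltW.
  move=> x; have [h1 _] := hC w (M *m x) w1; have [_ h2] := hC v x v1.
  apply: le_trans h1 _; apply: le_trans (hM x) _.
  rewrite -!mulrA; apply: ler_wpM2l; first exact: ltW.
  rewrite mulrCA; apply: ler_wpM2l => //.
  by rewrite mulrA.
have [b1 b2 b3 b4] := (fun x => hb t s x s1 st) 0.
split.
- apply: (hgen _ _ t s) => //; first exact: powR_ge0.
  by move=> x; have [] := hb t s x s1 st.
- apply: (hgen _ _ s t) => //; first exact: powR_ge0.
  by move=> x; have [] := hb t s x s1 st.
- apply: (hgen _ _ t s) => //; first exact: powR_ge0.
  by move=> x; have [] := hb t s x s1 st.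
- apply: (hgen _ _ s t) => //; first exact: powR_ge0.
  by move=> x; have [] := hb t s x s1 st.
Qed.


Definition elem {R : realType} {d : nat} (N : 'cV[R]_d -> R) (T : R -> R -> 'M[R]_d)
  (P : R -> 'M[R]_d) (lam a t : R) (x : 'cV[R]_d) (tau sig : R) : R :=
  N (T tau t *m P t *m x) * rho lam a (tau / t) +
  N (T sig t *m (1%:M - P t) *m x) * rho lam a (t / sig).

Definition Eset {R : realType} {d : nat} (N : 'cV[R]_d -> R) (T : R -> R -> 'M[R]_d)
  (P : R -> 'M[R]_d) (lam a t : R) (x : 'cV[R]_d) : set R :=
  [set r | exists tau sig, [/\ 1 <= tau, 1 <= sig & r = elem N T P lam a t x tau sig]].

Definition Nly {R : realType} {d : nat} (N : 'cV[R]_d -> R) (T : R -> R -> 'M[R]_d)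
  (P : R -> 'M[R]_d) (lam a t : R) (x : 'cV[R]_d) : R :=
  sup (Eset N T P lam a t x).

Lemma bound_helper {R : realType} (n o r c e w : R) :
  0 <= r -> 0 <= w -> n <= o * w -> o <= c * e -> e * r = 1 -> n * r <= c * w.
Proof.
move=> r0 w0 h1 h2 er.
apply: le_trans (ler_wpM2r r0 h1) _.
apply: le_trans (ler_wpM2r r0 (ler_wpM2r w0 h2)) _.
have -> : c * e * w * r = c * w * (e * r) by ring.
by rewrite er mulr1.
Qed.

Lemma elem_ge0 {R : realType} {d : nat} (N : 'cV[R]_d -> R) T P (lam a t : R) x tau sig :
  is_norm N -> 0 <= elem N T P lam a t x tau sig.
Proof.
case=> hP _ _ _; rewrite /elem.
by rewrite addr_ge0 // mulr_ge0 // rho_ge0.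
Qed.

Lemma elem_bound {R : realType} {d : nat} (N : 'cV[R]_d -> R) (T : R -> R -> 'M[R]_d)
  (P : R -> 'M[R]_d) (K a lam eps : R) :
  is_norm N -> (forall t, 1 <= t -> T t t = 1%:M) ->
  0 < K -> 0 < lam -> lam <= a -> 0 <= eps ->
  (forall t s, 1 <= s -> s <= t ->
        [/\ opnorm N (T t s *m P s) <= K * (t / s) `^ (- lam) * s `^ eps,
            opnorm N (T s t *m (1%:M - P t)) <= K * (t / s) `^ (- lam) * t `^ eps,
            opnorm N (T t s) <= K * (t / s) `^ a * s `^ eps &
            opnorm N (T s t) <= K * (t / s) `^ a * t `^ eps]) ->
  forall t x tau sig, 1 <= t -> 1 <= tau -> 1 <= sig ->
  elem N T P lam a t x tau sig <= 2 * (K + K * K) * t `^ (eps + eps) * N x.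
Proof.
move=> hN hT1 K0 l0 la eps0 hb t x tau sig t1 tau1 sig1.
have [hP hD hZ hTr] := hN.
have t0 : 0 < t by apply: lt_le_trans t1.
have tau0 : 0 < tau by apply: lt_le_trans tau1.
have sig0 : 0 < sig by apply: lt_le_trans sig1.
have te : t `^ eps <= t `^ (eps + eps) by apply: ler_powR => //; rewrite lerDl.
have tee : t `^ eps * t `^ eps = t `^ (eps + eps).
  by rewrite powRD //; apply/implyP => _; rewrite gt_eqF.
have Nx0 := hP x.
have Kt0 : 0 <= K * t `^ eps by rewrite mulr_ge0 ?powR_ge0 // ltW.
have tt1 : t / t = 1 by rewrite divff // gt_eqF.
have [hbP hbQ _ _] := hb t t t1 (lexx t).
have one : (1 : R) `^ (- lam) = 1 by rewrite powR1.
rewrite tt1 one mulr1 hT1 // !mul1mx in hbP hbQ.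
have NP : N (P t *m x) <= K * t `^ eps * N x.
  have := opnorm_bound N (T t t *m P t) hN x.
  rewrite hT1 // mul1mx => h; apply: le_trans h _.
  by apply: ler_wpM2r.
have NQ : N ((1%:M - P t) *m x) <= K * t `^ eps * N x.
  have := opnorm_bound N (T t t *m (1%:M - P t)) hN x.
  rewrite hT1 // mul1mx => h; apply: le_trans h _.
  by apply: ler_wpM2r.
have fin : K * t `^ eps * N x <= (K + K * K) * t `^ (eps + eps) * N x.
  apply: ler_wpM2r => //; apply: ler_pM => //; first exact: ltW.
    exact: powR_ge0.
  by rewrite lerDl mulr_ge0 // ltW.
have fin2 : K * t `^ eps * (K * t `^ eps * N x) <= (K + K * K) * t `^ (eps + eps) * N x.
  rewrite mulrA; apply: ler_wpM2r => //.
  rewrite -tee (_ : K * t `^ eps * (K * t `^ eps) = K * K * (t `^ eps * t `^ eps)); last by ring.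
  apply: ler_wpM2r; first by rewrite mulr_ge0 ?powR_ge0.
  by rewrite lerDr ltW.
have term1 : N (T tau t *m P t *m x) * rho lam a (tau / t) <=
    (K + K * K) * t `^ (eps + eps) * N x.
  case: (leP t tau) => htau.
  - have r1 : 1 <= tau / t by rewrite ler_pdivlMr // mul1r.
    rewrite (rho_ge1 _ _ _ la r1).
    have [ho1 _ _ _] := hb tau t t1 htau.
    apply: le_trans fin.
    apply: (@bound_helper _ _ (opnorm N (T tau t *m P t)) _ _ ((tau / t) `^ (- lam)) _).
    + exact: powR_ge0.
    + exact: Nx0.
    + exact: opnorm_bound.
    + by rewrite mulrAC.
    + by rewrite powR_N_mul // divr_gt0.
  - have r0 : 0 < tau / t by rewrite divr_gt0.
    have r1 : tau / t <= 1 by rewrite ler_pdivrMr // mul1r ltW.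
    rewrite (rho_le1 _ _ _ la r0 r1).
    have [_ _ _ ho4] := hb t tau tau1 (ltW htau).
    apply: le_trans fin2.
    apply: le_trans (_ : _ <= K * t `^ eps * N (P t *m x)) _; last by apply: ler_wpM2l.
    apply: (@bound_helper _ _ (opnorm N (T tau t)) _ _ ((t / tau) `^ a) (N (P t *m x))).
    + exact: powR_ge0.
    + exact: hP.
    + by rewrite -mulmxA; apply: opnorm_bound.
    + by rewrite mulrAC.
    + by rewrite -[X in _ * X `^ _]invf_div powR_inv_mul // divr_gt0.
have term2 : N (T sig t *m (1%:M - P t) *m x) * rho lam a (t / sig) <=
    (K + K * K) * t `^ (eps + eps) * N x.
  case: (leP sig t) => hsig.
  - have r1 : 1 <= t / sig by rewrite ler_pdivlMr // mul1r.
    rewrite (rho_ge1 _ _ _ la r1).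
    have [_ ho2 _ _] := hb t sig sig1 hsig.
    apply: le_trans fin.
    apply: (@bound_helper _ _ (opnorm N (T sig t *m (1%:M - P t))) _ _ ((t / sig) `^ (- lam)) _).
    + exact: powR_ge0.
    + exact: Nx0.
    + exact: opnorm_bound.
    + by rewrite mulrAC.
    + by rewrite powR_N_mul // divr_gt0.
  - have r0 : 0 < t / sig by rewrite divr_gt0.
    have r1 : t / sig <= 1 by rewrite ler_pdivrMr // mul1r ltW.
    rewrite (rho_le1 _ _ _ la r0 r1).
    have [_ _ ho3 _] := hb sig t t1 (ltW hsig).
    apply: le_trans fin2.
    apply: le_trans (_ : _ <= K * t `^ eps * N ((1%:M - P t) *m x)) _; last by apply: ler_wpM2l.
    apply: (@bound_helper _ _ (opnorm N (T sig t)) _ _ ((sig / t) `^ a) (N ((1%:M - P t) *m x))).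
    + exact: powR_ge0.
    + exact: hP.
    + by rewrite -mulmxA; apply: opnorm_bound.
    + by rewrite mulrAC.
    + by rewrite -[X in _ * X `^ _]invf_div powR_inv_mul // divr_gt0.
rewrite /elem; apply: le_trans (lerD term1 term2) _.
by rewrite le_eqVlt; apply/orP; left; apply/eqP; ring.
Qed.


Lemma Nly_facts {R : realType} {d : nat} (N : 'cV[R]_d -> R) (T : R -> R -> 'M[R]_d)
  (P : R -> 'M[R]_d) (lam a : R) (B : R -> R) :
  is_norm N -> (forall t, 1 <= t -> T t t = 1%:M) ->
  (forall t x tau sig, 1 <= t -> 1 <= tau -> 1 <= sig ->
     elem N T P lam a t x tau sig <= B t * N x) ->
  [/\ (forall t x, 1 <= t -> Nly N T P lam a t x <= B t * N x),
      (forall t x tau sig, 1 <= t -> 1 <= tau -> 1 <= sig ->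
          elem N T P lam a t x tau sig <= Nly N T P lam a t x),
      (forall t x, 1 <= t -> N x <= Nly N T P lam a t x) &
      (forall t1 t2 y x c, 1 <= t2 -> 0 <= c ->
         (forall tau sig, 1 <= tau -> 1 <= sig ->
            elem N T P lam a t1 y tau sig <= c * elem N T P lam a t2 x tau sig) ->
         Nly N T P lam a t1 y <= c * Nly N T P lam a t2 x)].
Proof.
move=> hN hT1 hEB.
have [hP hD hZ hTr] := hN.
have ne : forall t x, Eset N T P lam a t x !=set0.
  by move=> t x; exists (elem N T P lam a t x 1 1), 1, 1.
have hs : forall t x, 1 <= t -> has_sup (Eset N T P lam a t x).
  move=> t x t1; split; first exact: ne.
  by exists (B t * N x) => _ [tau [sig [tau1 sig1 ->]]]; apply: hEB.
have le_N : forall t x tau sig, 1 <= t -> 1 <= tau -> 1 <= sig ->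
    elem N T P lam a t x tau sig <= Nly N T P lam a t x.
  move=> t x tau sig t1 tau1 sig1; rewrite /Nly.
  have hub : forall y, Eset N T P lam a t x y -> y <= sup (Eset N T P lam a t x).
    by move=> y Ey; apply: sup_upper_bound => //; exact: hs.
  by apply: hub; exists tau, sig.
split => //.
- move=> t x t1; rewrite /Nly; apply: ge_sup; first exact: ne.
  by move=> _ [tau [sig [tau1 sig1 ->]]]; apply: hEB.
- move=> t x t1; apply: le_trans (le_N t x t t t1 t1 t1).
  rewrite /elem hT1 // !mul1mx divff ?gt_eqF ?(lt_le_trans ltr01 t1) //.
  have r1 : rho lam a 1 = 1 by rewrite /rho !powR1 minxx.
  rewrite r1 !mulr1.
  by have := hTr (P t *m x) ((1%:M - P t) *m x); rewrite -mulmxDl addrC subrK mul1mx.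
- move=> t1 t2 y x c t21 c0 hc; rewrite /Nly; apply: ge_sup; first exact: ne.
  move=> _ [tau [sig [tau1 sig1 ->]]]; apply: le_trans (hc tau sig tau1 sig1) _.
  by apply: ler_wpM2l => //; apply: le_N.
Qed.


Lemma elem_scale {R : realType} {d : nat} (N : 'cV[R]_d -> R) T P (lam a t : R) (al : R) x tau sig :
  is_norm N -> elem N T P lam a t (al *: x) tau sig = `|al| * elem N T P lam a t x tau sig.
Proof.
case=> _ _ hZ _; rewrite /elem -!scalemxAr !hZ; ring.
Qed.

Lemma elem_add {R : realType} {d : nat} (N : 'cV[R]_d -> R) T P (lam a t : R) x y tau sig :
  is_norm N -> elem N T P lam a t (x + y) tau sig <=
    elem N T P lam a t x tau sig + elem N T P lam a t y tau sig.
Proof.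
case=> _ _ _ hT; rewrite /elem !(mulmxDr _ x y).
have r1 := rho_ge0 lam a (tau / t); have r2 := rho_ge0 lam a (t / sig).
have h1 := hT (T tau t *m P t *m x) (T tau t *m P t *m y).
have h2 := hT (T sig t *m (1%:M - P t) *m x) (T sig t *m (1%:M - P t) *m y).
have h1' := ler_wpM2r r1 h1; have h2' := ler_wpM2r r2 h2.
rewrite mulrDl in h1'; rewrite mulrDl in h2'.
lra.
Qed.

Lemma Nly_norm {R : realType} {d : nat} (N : 'cV[R]_d -> R) (T : R -> R -> 'M[R]_d)
  (P : R -> 'M[R]_d) (lam a : R) (B : R -> R) :
  is_norm N -> (forall t, 1 <= t -> T t t = 1%:M) ->
  (forall t x tau sig, 1 <= t -> 1 <= tau -> 1 <= sig ->
     elem N T P lam a t x tau sig <= B t * N x) ->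
  forall t, 1 <= t -> is_norm (Nly N T P lam a t).
Proof.
move=> hN hT1 hEB t t1.
have [hP hD hZ hTr] := hN.
have [hub hle hlb htr] := Nly_facts _ _ _ _ _ _ hN hT1 hEB.
have Nly0 : forall x, 0 <= Nly N T P lam a t x by move=> x; apply: le_trans (hlb t x t1); exact: hP.
have hsc : forall al x, Nly N T P lam a t (al *: x) <= `|al| * Nly N T P lam a t x.
  move=> al x; apply: htr => // tau sig _ _.
  by rewrite elem_scale.
split => //.
- move=> x h0; apply: hD; apply/le_anti; rewrite hP andbT.
  by rewrite -h0; apply: hlb.
- move=> al x; apply/le_anti; rewrite hsc /=.
  have [->|al0] := eqVneq al 0.
    by rewrite normr0 mul0r Nly0.
  have := hsc al^-1 (al *: x); rewrite scalerA mulVf // scale1r normfV => h.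
  by rewrite -ler_pdivlMl ?normr_gt0 // mulrC.
- move=> x y; rewrite /Nly; apply: ge_sup.
    by exists (elem N T P lam a t (x + y) 1 1), 1, 1.
  move=> _ [tau [sig [tau1 sig1 ->]]].
  apply: le_trans (elem_add _ _ _ _ _ _ _ _ _ _ hN) _.
  by apply: lerD; apply: hle.
Qed.


Lemma mx_swap {R : realType} {d : nat} (U Pa M Pb Z : 'M[R]_d) (x : 'cV[R]_d) :
  Pa *m M = M *m Pb -> U *m Pa *m (M *m Z *m x) = (U *m M) *m (Pb *m Z) *m x.
Proof. by move=> H; rewrite !mulmxA -(mulmxA U Pa M) H !mulmxA. Qed.

Lemma comb2 {R : realType} (n1 n2 r1 r2 r1' r2' c : R) :
  0 <= n1 -> 0 <= n2 -> r1 <= c * r1' -> r2 <= c * r2' ->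
  n1 * r1 + n2 * r2 <= c * (n1 * r1' + n2 * r2').
Proof.
move=> n10 n20 h1 h2.
have := ler_wpM2l n10 h1; have := ler_wpM2l n20 h2.
move=> k2 k1; apply: le_trans (lerD k1 k2) _.
by rewrite le_eqVlt; apply/orP; left; apply/eqP; ring.
Qed.

Lemma rho_facts {R : realType} (lam a t s tau sig : R) :
  0 < lam -> lam <= a -> 1 <= s -> s <= t -> 1 <= tau -> 1 <= sig ->
  rho lam a (tau / t) <= (t / s) `^ (- lam) * rho lam a (tau / s) /\
  rho lam a (s / sig) <= (t / s) `^ (- lam) * rho lam a (t / sig) /\
  rho lam a (tau / t) <= (t / s) `^ a * rho lam a (tau / s) /\
  rho lam a (t / sig) <= (t / s) `^ a * rho lam a (s / sig) /\
  rho lam a (tau / s) <= (t / s) `^ a * rho lam a (tau / t) /\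
  rho lam a (s / sig) <= (t / s) `^ a * rho lam a (t / sig).
Proof.
move=> l0 la s1 st tau1 sig1.
have s0 : 0 < s by apply: lt_le_trans s1.
have t0 : 0 < t by apply: lt_le_trans (le_trans s1 st).
have tau0 : 0 < tau by apply: lt_le_trans tau1.
have sig0 : 0 < sig by apply: lt_le_trans sig1.
have ts1 : 1 <= t / s by rewrite ler_pdivlMr // mul1r.
have e1 : tau / t * (t / s) = tau / s.
  by rewrite mulrA divfK // gt_eqF.
have e2 : s / sig * (t / s) = t / sig.
  by rewrite mulrC mulrA divfK // gt_eqF.
have h1 : rho lam a (tau / t) <= (t / s) `^ (- lam) * rho lam a (tau / s).
  by rewrite -e1; apply: rhoA => //; rewrite divr_ge0 // ltW.
have h2 : rho lam a (s / sig) <= (t / s) `^ (- lam) * rho lam a (t / sig).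
  by rewrite -e2; apply: rhoA => //; rewrite divr_ge0 // ltW.
have pw : (t / s) `^ (- lam) <= (t / s) `^ a.
  by apply: powRN_le_powR => //; [exact: ltW | exact: le_trans (ltW l0) la].
split => //; split => //; split.
  apply: le_trans h1 _; apply: ler_wpM2r => //; exact: rho_ge0.
split; first by rewrite -e2; apply: rhoB => //; rewrite divr_ge0 // ltW.
split; first by rewrite -e1; apply: rhoB => //; rewrite divr_ge0 // ltW.
apply: le_trans h2 _; apply: ler_wpM2r => //; exact: rho_ge0.
Qed.


Lemma mx_swap1 {R : realType} {d : nat} (U Pa M Pb : 'M[R]_d) (x : 'cV[R]_d) :
  Pa *m M = M *m Pb -> U *m Pa *m (M *m x) = (U *m M) *m Pb *m x.
Proof. by move=> H; rewrite !mulmxA -(mulmxA U Pa M) H mulmxA. Qed.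

Lemma dir12 {R : realType} {d : nat} (A : R -> 'M[R]_d) (T : R -> R -> 'M[R]_d) (N : 'cV[R]_d -> R) :
  {within `[1, +oo[, continuous A} ->
  evolution_family A T ->
  is_norm N ->
  nonuniform_strong_poly_dichotomy N T ->
  exists Nt : R -> 'cV[R]_d -> R,
     (forall t, 1 <= t -> is_norm (Nt t)) /\
     strong_poly_dichotomy_wrt Nt T /\
     exists (C delta : R), 0 < C /\ 0 <= delta /\
       forall t (x : 'cV[R]_d), 1 <= t ->
         N x <= Nt t x /\ Nt t x <= C * t `^ delta * N x.
Proof.
move=> hA hT hN [K [a [lam [eps [P [K0 l0 la [eps0 hP] hb]]]]]].
have [hT1 _ _] := hT.
have coc := cocycle _ _ hA hT.
have [hPP hPinv] := hP.
have hEB := elem_bound _ _ _ _ _ _ _ hN hT1 K0 l0 la eps0 hb.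
have [hub hle hlb htr] := Nly_facts _ _ _ _ _ _ hN hT1 hEB.
have [hNP hND hNZ hNT] := hN.
exists (Nly N T P lam a); split; first exact: Nly_norm _ _ _ _ _ _ hN hT1 hEB.
split; last first.
  exists (2 * (K + K * K)), (eps + eps); split.
    by rewrite mulr_gt0 // addr_gt0 // mulr_gt0.
  split; first by rewrite addr_ge0.
  by move=> t x t1; split; [exact: hlb | exact: hub].
exists 1, a, lam, P; split => //.
move=> t s x s1 st.
have t1 : 1 <= t := le_trans s1 st.
have PQ u : 1 <= u -> P u *m (1%:M - P u) = 0.
  by move=> u1; rewrite mulmxBr mulmx1 hPP // subrr.
have QP u : 1 <= u -> (1%:M - P u) *m P u = 0.
  by move=> u1; rewrite mulmxBl mul1mx hPP // subrr.
have QQ u : 1 <= u -> (1%:M - P u) *m (1%:M - P u) = 1%:M - P u.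
  by move=> u1; rewrite mulmxBl mul1mx PQ // subr0.
have m1 : P t *m T t s = T t s *m P s by apply: hPinv.
have m2 : (1%:M - P t) *m T t s = T t s *m (1%:M - P s).
  by rewrite mulmxBl mul1mx mulmxBr mulmx1 m1.
have Tts : T t s *m T s t = 1%:M by rewrite coc // hT1.
have Tst : T s t *m T t s = 1%:M by rewrite coc // hT1.
have m3 : P s *m T s t = T s t *m P t.
  have : T s t *m P t *m T t s = P s by rewrite -mulmxA m1 mulmxA Tst mul1mx.
  move=> h; rewrite -h -!mulmxA Tts mulmx1.
  done.
have m4 : (1%:M - P s) *m T s t = T s t *m (1%:M - P t).
  by rewrite mulmxBl mul1mx mulmxBr mulmx1 m3.
have hrho := fun tau sig => @rho_facts _ lam a t s tau sig l0 la s1 st.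
have ts0 : 0 <= (t / s) `^ a by exact: powR_ge0.
have tsl0 : 0 <= (t / s) `^ (- lam) by exact: powR_ge0.
split; rewrite mul1r; apply: htr => // tau sig tau1 sig1;
  have [r1 [r2 [r3 [r4 [r5 r6]]]]] := hrho tau sig tau1 sig1; rewrite /elem.
- rewrite (mx_swap _ _ _ _ _ _ m1) coc // hPP //.
  rewrite (mx_swap _ _ _ _ _ _ m2) QP // mulmx0 mul0mx normN0 // mul0r addr0.
  apply: le_trans (_ : _ <= (t / s) `^ (- lam) *
     (N (T tau s *m P s *m x) * rho lam a (tau / s))) _.
    by rewrite mulrCA; apply: ler_wpM2l => //.
  apply: ler_wpM2l => //; rewrite lerDl mulr_ge0 //; exact: rho_ge0.
- rewrite (mx_swap _ _ _ _ _ _ m3) PQ // mulmx0 mul0mx normN0 // mul0r add0r.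
  rewrite (mx_swap _ _ _ _ _ _ m4) coc // QQ //.
  apply: le_trans (_ : _ <= (t / s) `^ (- lam) *
     (N (T sig t *m (1%:M - P t) *m x) * rho lam a (t / sig))) _.
    by rewrite mulrCA; apply: ler_wpM2l => //.
  apply: ler_wpM2l => //; rewrite lerDr mulr_ge0 //; exact: rho_ge0.
- rewrite (mx_swap1 _ _ _ _ _ m1) (mx_swap1 _ _ _ _ _ m2) !coc //.
  by apply: comb2.
- rewrite (mx_swap1 _ _ _ _ _ m3) (mx_swap1 _ _ _ _ _ m4) !coc //.
  by apply: comb2.
Qed.


Theorem proposition5p1 (R : realType) (d : nat)
    (A : R -> 'M[R]_d) (T : R -> R -> 'M[R]_d) (N : 'cV[R]_d -> R) :
  {within `[1, +oo[, continuous A} ->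
  evolution_family A T ->
  is_norm N ->
  (nonuniform_strong_poly_dichotomy N T <->
   exists Nt : R -> 'cV[R]_d -> R,
     (forall t, 1 <= t -> is_norm (Nt t)) /\
     strong_poly_dichotomy_wrt Nt T /\
     exists (C delta : R), 0 < C /\ 0 <= delta /\
       forall t (x : 'cV[R]_d), 1 <= t ->
         N x <= Nt t x /\ Nt t x <= C * t `^ delta * N x).
Proof.
move=> hA hT hN; split.
  exact: (dir12 _ _ _ hA hT hN).
exact: (dir21 _ _ hN).
Qed.
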